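(* Let $n\geq 1$. Choose edges of the complete bipartite graph $K_{n,n}$ one at a time in a uniformly random order (without repetition), stopping as soon as every vertex has degree at least one; call the resulting random graph $G_\omega$. Then the expected number of perfect matchings contained in $G_\omega$ is $$n!\left(\frac{2}{\binom{2n-1}{n}} - \frac{1}{\binom{3n-2}{n}}\right).$$
   Context: Precisely: a uniformly random ordering $(e_1,\dots,e_{n^2})$ of the edges of $K_{n,n}$ is chosen, $k$ is the least index such that the graph on all $2n$ vertices with edges $e_1,\dots,e_k$ has no isolated vertex, and $G_\omega$ is that graph. A perfect matching is a set of edges such that every vertex lies in exactly one of them. *)

(* Defs.v *)
From mathcomp Require Import all_boot all_order all_algebra.
Set Implicit Arguments. Unset Strict Implicit. Unset Printing Implicit Defensive.

(* Edges of K_{n,n}: a pair (i, j) joins left vertex i to right vertex j. *)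
Definition edge (n : nat) := ('I_n * 'I_n)%type.

(* An ordering (e_1, ..., e_{n^2}) of the edges: an injective (hence bijective)
   map from positions 'I_(n*n) to edges.  Position p : 'I_(n*n) holds e_{p+1}. *)
Definition ordering (n : nat) := {ffun 'I_(n * n) -> edge n}.
Definition is_ordering n (o : ordering n) : bool := injectiveb o.

Definition no_isolated n (o : ordering n) (k : nat) : bool :=
  [forall i : 'I_n, exists p : 'I_(n * n), (p < k) && ((o p).1 == i)] &&
  [forall j : 'I_n, exists p : 'I_(n * n), (p < k) && ((o p).2 == j)].

Definition stop_time n (o : ordering n) : nat :=
  find (no_isolated o) (iota 0 (n * n).+1).

Definition G_omega n (o : ordering n) : {set edge n} :=
  [set o p | p : 'I_(n * n) & p < stop_time o].

Definition perfect_matching n (M : {set edge n}) : bool :=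
  [forall i : 'I_n, #|[set e in M | e.1 == i]| == 1] &&
  [forall j : 'I_n, #|[set e in M | e.2 == j]| == 1].

Definition num_pm_in n (G : {set edge n}) : nat :=
  #|[set M : {set edge n} | (M \subset G) && perfect_matching M]|.

Definition expected_pm (n : nat) : rat :=
  ((\sum_(o : ordering n | is_ordering o) (num_pm_in (G_omega o))%:R) /
   (#|[pred o : ordering n | is_ordering o]|)%:R)%R.

(* Main.v *)
Require Import Defs.
From mathcomp Require Import all_boot all_order all_algebra.
Set Implicit Arguments. Unset Strict Implicit. Unset Printing Implicit Defensive.

Lemma index_filter_lt (T : eqType) (a : pred T) (l : seq T) x y :
  a x -> a y ->
  (index x l < index y l) = (index x (filter a l) < index y (filter a l)).
Proof.
move=> ax ay; elim: l => [|z l IH] //=.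
case: (eqVneq z x) => [zx|zx].
  by subst z; rewrite ax /= eqxx; case: (x == y).
case: (eqVneq z y) => [zy|zy].
  by subst z; rewrite ay /= eqxx (negbTE zx).
case: (a z) => /=; rewrite ?(negbTE zx) ?(negbTE zy) ?ltnS //.
Qed.

Lemma perm_enumT (T : finType) (s : seq T) :
  uniq s -> size s = #|T| -> perm_eq s (enum T).
Proof.
move=> us ss; apply: uniq_perm => //; first exact: enum_uniq.
have: #|mem s| = #|predT : pred T| by rewrite (card_uniqP us) ss.
move/subset_cardP => H x; rewrite mem_enum.
by have := H (subset_predT _) x.
Qed.

Lemma count_sum (I : Type) (a : pred I) (s : seq I) :
  count a s = \sum_(i <- s) (a i : nat).
Proof. by elim: s => [|x s IH]; rewrite ?big_nil ?big_cons //= IH. Qed.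

Lemma in_drop_uniq (T : eqType) (w : seq T) x i :
  uniq w -> x \in w -> (x \in drop i w) = (i <= index x w).
Proof.
move=> uw xw.
have : uniq (take i w ++ drop i w) by rewrite cat_take_drop.
rewrite cat_uniq => /and3P [_ H _].
have: x \in take i w ++ drop i w by rewrite cat_take_drop.
rewrite mem_cat (in_take _ xw).
case: (leqP i (index x w)) => hi /=.
  by move=> ->.
move=> _; apply/negP => xd.
by case/negP: H; apply/hasP; exists x => //; rewrite (in_take _ xw).
Qed.

Section Unif.
Variable T : finType.
Variable W : {set T}.

Definition fw (l : seq T) := [seq x <- l | x \in W].
Definition pl := permutations (enum T).
Definition cw v := count (fun l => fw l == v) pl.

Lemma cw_le v v' : uniq v -> perm_eq v v' -> {subset v <= W} -> cw v <= cw v'.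
Proof.
move=> uv pv vW.
have sv := perm_size pv.
have uv' : uniq v' by rewrite -(perm_uniq pv).
have vv' := perm_mem pv.
pose g := fun x => if x \in v then nth x v' (index x v) else x.
have ginj : injective g.
  move=> x y; rewrite /g; case: ifP => xv; case: ifP => yv.
  - move=> h; have hi : index x v = index y v.
      apply/eqP; rewrite -(nth_uniq x (s:=v')) -?sv ?index_mem // h.
      by rewrite (set_nth_default x) // -sv index_mem.
    by have := congr1 (nth x v) hi; rewrite !nth_index.
  - move=> h; have : y \in v' by rewrite -h mem_nth // -sv index_mem.
    by rewrite -vv' yv.
  - move=> h; have : x \in v' by rewrite h mem_nth // -sv index_mem.
    by rewrite -vv' xv.
  - by [].
have gW : forall x, (g x \in W) = (x \in W).
  move=> x; rewrite /g; case: ifP => // xv.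
  have h1 : nth x v' (index x v) \in v by rewrite vv' mem_nth // -sv index_mem.
  by rewrite (vW _ h1) (vW _ xv).
have gv : map g v = v'.
  case: (ltnP 0 (size v)) => [hv|]; last first.
    rewrite leqn0 => /nilP v0; rewrite v0 /=; apply/esym/nilP.
    by rewrite /nilp -sv v0.
  case E : v hv => [//|x0 v0] _; rewrite -E.
  apply: (@eq_from_nth _ x0); first by rewrite size_map sv.
  move=> i; rewrite size_map => hi.
  rewrite (nth_map x0) // /g mem_nth // index_uniq //.
  by apply: set_nth_default; rewrite -sv.
have key : forall l, l \in pl -> fw l = v -> (map g l \in pl) && (fw (map g l) == v').
  move=> l; rewrite /pl !mem_permutations => pl0 fl.
  apply/andP; split.
    apply: perm_enumT; first by rewrite (map_inj_uniq ginj) (perm_uniq pl0) enum_uniq.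
    by rewrite size_map (perm_size pl0) -cardE.
  rewrite /fw filter_map -gv; apply/eqP; congr map.
  rewrite -fl; apply: eq_in_filter => x _ /=; exact: gW.
rewrite /cw -!size_filter.
have <- : size (map (map g) [seq l <- pl | fw l == v]) = size [seq l <- pl | fw l == v].
  by rewrite size_map.
apply: uniq_leq_size.
  rewrite (map_inj_uniq (inj_map ginj)) filter_uniq //; exact: permutations_uniq.
move=> y /mapP [l]; rewrite mem_filter => /andP [/eqP fl lp] ->.
by rewrite mem_filter andbC key.
Qed.

Definition wb := fw (enum T).
Definition pwb := permutations wb.

Lemma uniq_wb : uniq wb.
Proof. by rewrite filter_uniq // enum_uniq. Qed.

Lemma mem_wb x : (x \in wb) = (x \in W).
Proof. by rewrite mem_filter mem_enum andbT. Qed.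

Lemma size_wb : size wb = #|W|.
Proof.
rewrite -(card_uniqP uniq_wb); apply: eq_card => x; exact: mem_wb.
Qed.

Lemma cw_pwb w : w \in pwb -> cw w = cw wb.
Proof.
rewrite mem_permutations => pw.
have uw : uniq w by rewrite (perm_uniq pw) uniq_wb.
have wW : {subset w <= W} by move=> x; rewrite (perm_mem pw) mem_wb.
apply/eqP; rewrite eqn_leq cw_le //= cw_le ?uniq_wb //.
  by rewrite perm_sym.
by move=> x; rewrite mem_wb.
Qed.

Lemma count_fw (Q : pred (seq T)) :
  count (fun l => Q (fw l)) pl = cw wb * count Q pwb.
Proof.
rewrite count_sum.
have E1 : forall l, l \in pl -> (Q (fw l) : nat) = \sum_(w <- pwb) (((fw l == w) && Q w) : nat).
  move=> l lp; rewrite -count_sum.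
  have fp : fw l \in pwb.
    rewrite mem_permutations /fw /wb; apply: perm_filter.
    by rewrite -mem_permutations.
  case: (boolP (Q (fw l))) => q.
    rewrite (@eq_count _ _ (pred1 (fw l))) ?count_uniq_mem ?fp //.
      exact: permutations_uniq.
    by move=> w /=; case: (eqVneq (fw l) w) => [<-|ne] //=; rewrite q.
  rewrite (@eq_count _ _ pred0) ?count_pred0 //.
  by move=> w /=; case: (eqVneq (fw l) w) => [<-|ne] //=; rewrite (negbTE q).

rewrite (eq_big_seq _ E1) exchange_big /=.
rewrite count_sum big_distrr /=; apply: eq_big_seq => w wp.
rewrite -(cw_pwb wp) /cw count_sum big_distrl /=.
by apply: eq_bigr => l _; case: (Q w); rewrite ?andbT ?andbF ?muln1 ?muln0.
Qed.

Lemma size_pl : size pl = #|T|`!.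
Proof. by rewrite size_permutations ?enum_uniq // -cardE. Qed.

Lemma cw_fact : #|T|`! = cw wb * #|W|`!.
Proof.
rewrite -size_pl -size_wb -size_permutations ?uniq_wb //.
by have := count_fw predT; rewrite !count_predT.
Qed.

End Unif.

Section Pattern.
Variable T : finType.
Variables (S U : {set T}) (e : T).
Hypotheses (eS : e \notin S) (eU : e \notin U) (dSU : [disjoint S & U]).

Definition good (w : seq T) :=
  [forall s in S, index s w < index e w] && [forall u in U, index e w < index u w].

Let W := e |: (S :|: U).

Lemma memW x : (x \in W) = [|| x == e, x \in S | x \in U].
Proof. by rewrite !inE. Qed.

Lemma SU x : x \in S -> x \in U -> False.
Proof.
move=> xS xU; move/pred0P: dSU => /(_ x) /=. by rewrite xS xU.
Qed.

Lemma count_good : count good (pwb W) = #|S|`! * #|U|`!.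
Proof.
pose f := fun s u => s ++ e :: u.
pose AP := [seq f s u | s <- permutations (enum S), u <- permutations (enum U)].
have sAP : size AP = #|S|`! * #|U|`!.
  by rewrite size_allpairs !size_permutations ?enum_uniq // -!cardE.
rewrite -sAP -size_filter; apply: perm_size.
apply: uniq_perm.
- by rewrite filter_uniq // permutations_uniq.
- apply: allpairs_uniq; try exact: permutations_uniq.
  move=> [s1 u1] [s2 u2] /allpairsP [[x1 y1] /= [h1 _ [-> ->]]].
  move=> /allpairsP [[x2 y2] /= [h2 _ [-> ->]]] /= /eqP.
  rewrite /f eqseq_cat; last first.
    rewrite mem_permutations in h1; rewrite mem_permutations in h2.
    by rewrite (perm_size h1) (perm_size h2).
  by case/andP => /eqP -> /eqP [->].
move=> w; rewrite mem_filter mem_permutations.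
apply/idP/idP.
- case/andP => G pw.
  have uw : uniq w by rewrite (perm_uniq pw) uniq_wb.
  have mw : forall x, (x \in w) = (x \in W) by move=> x; rewrite (perm_mem pw) mem_wb.
  have ew : e \in w by rewrite mw memW eqxx.
  case/andP: G => /forall_inP GS /forall_inP GU.
  set k := index e w.
  have wE : w = f (take k w) (drop k.+1 w).
    by rewrite /f -{1}(cat_take_drop k w) (drop_nth e) ?index_mem // nth_index.
  rewrite wE; apply/allpairsP; exists (take k w, drop k.+1 w); split => //=.
    rewrite mem_permutations; apply: uniq_perm; rewrite ?take_uniq ?enum_uniq //.
    move=> x; rewrite mem_enum.
    case: (boolP (x \in w)) => xw; last first.
      rewrite (contraNF (@mem_take _ _ _ _) xw).
      by apply/esym/negP => xS; move: xw; rewrite mw memW xS orbT.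
    rewrite (in_take _ xw).
    move: (xw); rewrite mw memW => /or3P [/eqP ->|xS|xU].
    - by rewrite ltnn (negbTE eS).
    - by rewrite xS GS.
    - have := GU _ xU; rewrite -/k => h.
      rewrite ltnNge (ltnW h) /=; apply/esym/negP => xS; exact: SU xS xU.
  rewrite mem_permutations; apply: uniq_perm; rewrite ?drop_uniq ?enum_uniq //.
  move=> x; rewrite mem_enum.
  case: (boolP (x \in w)) => xw; last first.
    rewrite (contraNF (@mem_drop _ _ _ _) xw).
    by apply/esym/negP => xU; move: xw; rewrite mw memW xU !orbT.
  rewrite (in_drop_uniq _ uw xw).
  move: (xw); rewrite mw memW => /or3P [/eqP ->|xS|xU].
  - by rewrite ltnn (negbTE eU).
  - have := GS _ xS; rewrite -/k => h.
    rewrite leqNgt ltnS (ltnW h) /=; apply/esym/negP => xU; exact: SU xS xU.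
  - by rewrite xU GU.
- case/allpairsP => [[s u] /= [hs hu ->]].
  rewrite mem_permutations in hs; rewrite mem_permutations in hu.
  have ms := perm_mem hs; have mu := perm_mem hu.
  have es : e \notin s by rewrite ms mem_enum.
  have eu : e \notin u by rewrite mu mem_enum.
  apply/andP; split.
    rewrite /good /f; apply/andP; split; apply/forall_inP => x xS.
      have xs : x \in s by rewrite ms mem_enum.
      by rewrite !index_cat xs (negbTE es) /= eqxx addn0 index_mem.
    have xs : x \notin s.
      by rewrite ms mem_enum; apply/negP => xS'; exact: SU xS' xS.
    have xe : e != x by apply/eqP => ex; move: eU; rewrite ex xS.
    rewrite !index_cat (negbTE xs) (negbTE es) /= eqxx (negbTE xe) addn0.
    by rewrite -addn1 leq_add2l.
  apply: uniq_perm; rewrite ?uniq_wb //.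
    rewrite /f cat_uniq /= (perm_uniq hs) (perm_uniq hu) !enum_uniq (negbTE es) eu /= ?andbT.
    apply/hasP => [[x xu xs]].
    by move: xu xs; rewrite mu ms !mem_enum => xU xS; exact: SU xS xU.
  move=> x; rewrite mem_wb memW /f mem_cat in_cons ms mu !mem_enum.
  by rewrite orbCA.
Qed.

Lemma count_pattern :
  count good (pl T) * (#|S| + #|U|).+1`! = #|T|`! * #|S|`! * #|U|`!.
Proof.
have cardW : #|W| = (#|S| + #|U|).+1.
  rewrite cardsU1 !inE negb_or eS eU /= cardsU.
  have -> : S :&: U = set0 by apply/setP => x; rewrite !inE; apply/negP => /andP [a b]; exact: SU a b.
  by rewrite cards0 subn0 add1n.
have -> : count good (pl T) = count (fun l => good (fw W l)) (pl T).
  apply: eq_in_count => l; rewrite /pl mem_permutations => pl0.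
  rewrite /good /fw.
  have eW : e \in W by rewrite memW eqxx.
  congr andb; apply: eq_forallb_in => x /= xS; apply: index_filter_lt => //.
  - by rewrite memW xS orbT.
  - by rewrite memW xS !orbT.
rewrite count_fw count_good (cw_fact W) cardW.
by rewrite mulnAC mulnA.
Qed.

End Pattern.

From mathcomp Require Import fingroup perm.

Section Sem.
Variable m : nat.
Local Notation n := m.+1.
Local Notation T := (edge n).
Local Notation N := (n * n).

Definition noisoL (l : seq T) k :=
  [forall i : 'I_n, exists x : T, (x.1 == i) && (index x l < k)] &&
  [forall j : 'I_n, exists x : T, (x.2 == j) && (index x l < k)].

Definition stopL l := find (noisoL l) (iota 0 N.+1).
Definition GL l : {set T} := [set x | index x l < stopL l].

Definition Mof (s : {perm 'I_n}) : {set T} := [set (i, s i) | i : 'I_n].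
Definition rowE (e : T) : {set T} := [set f : T | (f.1 == e.1) && (f != e)].
Definition colE (e : T) : {set T} := [set f : T | (f.2 == e.2) && (f != e)].

Variable l : seq T.
Hypothesis ul : uniq l.
Hypothesis all_l : forall x, x \in l.
Hypothesis sl : size l = N.

Lemma idx_lt x : index x l < N.
Proof. by rewrite -sl index_mem. Qed.

Lemma idx_inj x y : index x l = index y l -> x = y.
Proof. by move=> h; rewrite -(nth_index x (all_l x)) h nth_index. Qed.

Lemma noiso_full : noisoL l N.
Proof.
apply/andP; split; apply/forallP => i; apply/existsP; exists (i, i).
  by rewrite eqxx idx_lt.
by rewrite eqxx idx_lt.
Qed.

Lemma has_noiso : has (noisoL l) (iota 0 N.+1).
Proof. by apply/hasP; exists N; [rewrite mem_iota add0n ltnSn | exact: noiso_full]. Qed.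

Lemma stop_spec : stopL l <= N /\ noisoL l (stopL l).
Proof.
have H := has_noiso; have := H; rewrite has_find size_iota ltnS => hs.
split => //; have := nth_find 0 H; rewrite nth_iota //.
Qed.

Lemma before_stop k : k < stopL l -> ~~ noisoL l k.
Proof.
move=> hk; have hk2 : k < N.+1 by apply: (leq_trans hk); case: stop_spec => h _; exact: leqW h.
by have := before_find 0 hk; rewrite nth_iota // => ->.
Qed.

Lemma after_stop t : (forall k, k <= t -> ~~ noisoL l k) -> t < stopL l.
Proof.
move=> H; rewrite ltnNge; apply/negP => hs.
by case: stop_spec => _; apply/negP; apply: H.
Qed.

Variable s : {perm 'I_n}.
Local Notation M := (Mof s).

Lemma inM x : (x \in M) = (x.2 == s x.1).
Proof.
case: x => i j /=; apply/imsetP/eqP => [[k _ [-> ->]] // | ->].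
by exists i.
Qed.

Definition XE e := good (M :\ e) (rowE e) e l.
Definition YE e := good (M :\ e) (colE e) e l.

Lemma sem : (M \subset GL l) = [exists e in M, XE e || YE e].
Proof.
apply/idP/idP.
- move=> sub.
  pose i0 := [arg max_(i > ord0) index (i, s i) l].
  have im : forall i, index (i, s i) l <= index (i0, s i0) l.
    by move=> i; rewrite /i0; case: arg_maxnP => // k _ H; apply: H.
  set e := (i0, s i0); set t := index e l.
  have eM : e \in M by rewrite inM.
  have ht : t < stopL l by have := subsetP sub e eM; rewrite inE.
  have Mlt : forall x, x \in M :\ e -> index x l < t.
    move=> [i j]; rewrite !inE inM /= => /andP [ne /eqP ej]; rewrite ej in ne *.
    rewrite ltn_neqAle im andbT; apply/negP => /eqP /idx_inj h.
    by move: ne; rewrite h eqxx.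
  apply/existsP; exists e; rewrite eM /=.
  move: (before_stop ht); rewrite /noisoL negb_and => /orP [].
  + case/forallPn => i /existsPn H.
    have ei : (i, s i) = e.
      apply: idx_inj; apply/eqP; rewrite eqn_leq im /=.
      by move: (H (i, s i)); rewrite eqxx /= -leqNgt.
    apply/orP; left; apply/andP; split; apply/forall_inP => // x.
    rewrite inE => /andP [/eqP x1 xe].
    move: (H x); rewrite -ei /= in x1 *; rewrite x1 eqxx /= -leqNgt.
    rewrite leq_eqVlt => /orP [/eqP h|]; last by rewrite ei.
    by move: xe; rewrite -(idx_inj h) eqxx.
  + case/forallPn => j /existsPn H.
    have ei : ((s^-1)%g j, j) = e.
      apply: idx_inj; apply/eqP; rewrite eqn_leq.
      have -> : ((s^-1)%g j, j) = ((s^-1)%g j, s ((s^-1)%g j)) by rewrite permKV.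
      rewrite im /=.
      by move: (H ((s^-1)%g j, j)); rewrite eqxx /= -leqNgt permKV.
    apply/orP; right; apply/andP; split; apply/forall_inP => // x.
    rewrite inE => /andP [/eqP x1 xe].
    move: (H x); rewrite -ei /= in x1 *; rewrite x1 eqxx /= -leqNgt.
    rewrite leq_eqVlt => /orP [/eqP h|]; last by rewrite ei.
    by move: xe; rewrite -(idx_inj h) eqxx.
- case/exists_inP => e eM XY.
  set t := index e l.
  have Mle : forall x, x \in M -> index x l <= t.
    move=> x xM; case: (eqVneq x e) => [-> //|ne].
    have xMe : x \in M :\ e by rewrite !inE ne xM.
    by case/orP: XY => /andP [/forall_inP H _]; apply: ltnW; apply: H.
  have ht : t < stopL l.
    apply: after_stop => k hk; rewrite /noisoL negb_and.
    case/orP: XY => /andP [_ /forall_inP H]; apply/orP; [left|right].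
    + apply/forallPn; exists e.1; apply/existsPn => x; rewrite negb_and -leqNgt.
      case: (eqVneq x e) => [->|ne]; first by rewrite hk orbT.
      case: (eqVneq x.1 e.1) => [h|h] //=.
      by apply: (leq_trans hk); apply: ltnW; apply: H; rewrite inE h eqxx ne.
    + apply/forallPn; exists e.2; apply/existsPn => x; rewrite negb_and -leqNgt.
      case: (eqVneq x e) => [->|ne]; first by rewrite hk orbT.
      case: (eqVneq x.2 e.2) => [h|h] //=.
      by apply: (leq_trans hk); apply: ltnW; apply: H; rewrite inE h eqxx ne.
  apply/subsetP => x xM; rewrite inE.
  exact: leq_ltn_trans (Mle x xM) ht.
Qed.

Lemma sem_uniq e e2 : e \in M -> e2 \in M -> XE e || YE e -> XE e2 || YE e2 -> e = e2.
Proof.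
move=> eM eM2 h h2; case: (eqVneq e e2) => // ne.
have A : index e2 l < index e l.
  by case/orP: h => /andP [/forall_inP H _]; apply: H; rewrite !inE eq_sym ne eM2.
have B : index e l < index e2 l.
  by case/orP: h2 => /andP [/forall_inP H _]; apply: H; rewrite !inE ne eM.
by move: (ltn_trans A B); rewrite ltnn.
Qed.

End Sem.

Section Count.
Variable m : nat.
Local Notation n := m.+1.
Local Notation T := ('I_n * 'I_n)%type.
Local Notation N := (n * n).

Lemma cardT_edge : #|{: T}| = N.
Proof. by rewrite card_prod card_ord. Qed.

Lemma card_line1 (i : 'I_n) : #|[set f : T | f.1 == i]| = n.
Proof.
have -> : [set f : T | f.1 == i] = [set (i, j) | j : 'I_n].
  apply/setP => [[a b]]; rewrite inE /=; apply/eqP/imsetP => [->|[j _ [-> _]]] //.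
  by exists b.
by rewrite card_imset ?card_ord // => x y [].
Qed.

Lemma card_line2 (j : 'I_n) : #|[set f : T | f.2 == j]| = n.
Proof.
have -> : [set f : T | f.2 == j] = [set (i, j) | i : 'I_n].
  apply/setP => [[a b]]; rewrite inE /=; apply/eqP/imsetP => [->|[i _ [_ ->]]] //.
  by exists a.
by rewrite card_imset ?card_ord // => x y [].
Qed.

Lemma card_rowE (e : T) : #|rowE e| = m.
Proof.
have := cardsD1 e [set f : T | f.1 == e.1]; rewrite card_line1 inE eqxx.
have -> : [set f : T | f.1 == e.1] :\ e = rowE e.
  by apply/setP => f; rewrite !inE andbC.
by rewrite add1n => -[].
Qed.

Lemma card_colE (e : T) : #|colE e| = m.
Proof.
have := cardsD1 e [set f : T | f.2 == e.2]; rewrite card_line2 inE eqxx.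
have -> : [set f : T | f.2 == e.2] :\ e = colE e.
  by apply/setP => f; rewrite !inE andbC.
by rewrite add1n => -[].
Qed.

Lemma rowcolI (e : T) : rowE e :&: colE e = set0.
Proof.
apply/setP => -[a b]; case: e => c d; rewrite !inE /=.
case: (eqVneq a c) => [->|] //=; case: (eqVneq b d) => [->|] //=.
by rewrite eqxx.
by rewrite andbF.
Qed.

Lemma card_rowcol (e : T) : #|rowE e :|: colE e| = m + m.
Proof. by rewrite cardsU rowcolI cards0 subn0 card_rowE card_colE. Qed.

Variable s : {perm 'I_n}.
Local Notation M := (Mof s).

Lemma card_M : #|M| = n.
Proof. by rewrite card_imset ?card_ord // => x y []. Qed.

Lemma card_Me (e : T) : e \in M -> #|M :\ e| = m.
Proof. by move=> eM; have := cardsD1 e M; rewrite eM card_M add1n => -[]. Qed.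

Lemma disj_row (e : T) : e \in M -> [disjoint M :\ e & rowE e].
Proof.
move=> eM; apply/pred0P => -[a b] /=; rewrite !inE (inM s) /=.
move: eM; rewrite (inM s); case: e => c d /= /eqP ->.
apply/negP => /andP [/andP [ne /eqP bs] /andP [/eqP ac _]].
by move: ne; rewrite bs ac eqxx.
Qed.

Lemma disj_col (e : T) : e \in M -> [disjoint M :\ e & colE e].
Proof.
move=> eM; apply/pred0P => -[a b] /=; rewrite !inE (inM s) /=.
move: eM; rewrite (inM s); case: e => c d /= /eqP ->.
apply/negP => /andP [/andP [ne /eqP bs] /andP [/eqP bc _]].
have ac : a = c by apply: (@perm_inj _ s); rewrite -bs.
by move: ne; rewrite bs ac eqxx.
Qed.

Lemma disj_rowcol (e : T) : e \in M -> [disjoint M :\ e & rowE e :|: colE e].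
Proof.
move=> eM; rewrite -setI_eq0 setIUr (disjoint_setI0 (disj_row eM)).
by rewrite (disjoint_setI0 (disj_col eM)) setU0.
Qed.

Lemma eMe (e : T) : e \notin M :\ e. Proof. by rewrite !inE eqxx. Qed.
Lemma erow (e : T) : e \notin rowE e. Proof. by rewrite !inE !eqxx. Qed.
Lemma ecol (e : T) : e \notin colE e. Proof. by rewrite !inE !eqxx. Qed.
Lemma erowcol (e : T) : e \notin rowE e :|: colE e.
Proof. by rewrite inE negb_or erow ecol. Qed.

Lemma good_U (S A B : {set T}) e w :
  good S A e w && good S B e w = good S (A :|: B) e w.
Proof.
rewrite /good; case: [forall x in S, _] => //=.
apply/andP/forall_inP => [[/forall_inP HA /forall_inP HB] x|H].
  by rewrite inE => /orP [/HA|/HB].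
by split; apply/forall_inP => x xi; apply: H; rewrite inE xi ?orbT.
Qed.

Definition cXv := (N`! * m`! * m`!) %/ (m + m).+1`!.
Definition cZv := (N`! * m`! * (m + m)`!) %/ (m + (m + m)).+1`!.

Lemma cntX (e : T) : e \in M -> count (good (M :\ e) (rowE e) e) (pl T) = cXv.
Proof.
move=> eM; have := count_pattern (eMe e) (erow e) (disj_row eM).
rewrite card_Me // card_rowE card_prod !card_ord => H.
by rewrite /cXv -H mulnK // fact_gt0.
Qed.

Lemma cntY (e : T) : e \in M -> count (good (M :\ e) (colE e) e) (pl T) = cXv.
Proof.
move=> eM; have := count_pattern (eMe e) (ecol e) (disj_col eM).
rewrite card_Me // card_colE card_prod !card_ord => H.
by rewrite /cXv -H mulnK // fact_gt0.
Qed.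

Lemma cntZ (e : T) : e \in M -> count (good (M :\ e) (rowE e :|: colE e) e) (pl T) = cZv.
Proof.
move=> eM; have := count_pattern (eMe e) (erowcol e) (disj_rowcol eM).
rewrite card_Me // card_rowcol card_prod !card_ord => H.
by rewrite /cZv -H mulnK // fact_gt0.
Qed.

Lemma cntXY (e : T) : e \in M ->
  count (fun l => XE l s e || YE l s e) (pl T) + cZv = cXv + cXv.
Proof.
move=> eM; rewrite -(cntZ eM) -{1}(cntX eM) -(cntY eM).
rewrite -[in RHS]count_predUI; congr addn; apply: eq_count => l /=.
by rewrite good_U.
Qed.

Lemma pl_props l : l \in pl T -> [/\ uniq l, forall x, x \in l & size l = N].
Proof.
rewrite mem_permutations => pe; split.
- by rewrite (perm_uniq pe) enum_uniq.
- by move=> x; rewrite (perm_mem pe) mem_enum.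
- by rewrite (perm_size pe) -cardE cardT_edge.
Qed.

Lemma cnt_sub : count (fun l => M \subset GL l) (pl T) + n * cZv = n * (cXv + cXv).
Proof.
have E : forall l, l \in pl T ->
    ((M \subset GL l) : nat) = \sum_(e in M) ((XE l s e || YE l s e) : nat).
  move=> l lp; case: (pl_props lp) => ul al sl.
  rewrite (sem al sl).
  case: (boolP [exists e in M, XE l s e || YE l s e]) => [/exists_inP [e eM he]|H].
    rewrite (bigD1 e) //= he big1 // => e2 /andP [e2M ne].
    case: (boolP (XE l s e2 || YE l s e2)) => // h2.
    by move: ne; rewrite (sem_uniq eM e2M he h2) eqxx.
  rewrite big1 // => e eM; case: (boolP (XE l s e || YE l s e)) => // h.
  by case/exists_inP: H; exists e.
rewrite count_sum (eq_big_seq _ E) exchange_big /=.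
have -> : n * cZv = \sum_(e in M) cZv by rewrite sum_nat_const card_M.
have -> : n * (cXv + cXv) = \sum_(e in M) (cXv + cXv) by rewrite sum_nat_const card_M.
rewrite -big_split /=.
by apply: eq_bigr => e eM; rewrite -count_sum -(cntXY eM).
Qed.

End Count.

Lemma uniq_fgraph (D T : finType) (o : {ffun D -> T}) :
  uniq (fgraph o) = injectiveb o.
Proof. by rewrite -codom_ffun. Qed.

Lemma sum_orderings (D T : finType) (F : seq T -> nat) : #|D| = #|T| ->
  \sum_(o : {ffun D -> T} | injectiveb o) F (fgraph o) =
  \sum_(l <- permutations (enum T)) F l.
Proof.
move=> cDT.
pose g := fun o : {ffun D -> T} => tval (fgraph o).
rewrite (perm_big (map g (filter (fun o : {ffun D -> T} => injectiveb o) (index_enum _)))).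
  by rewrite big_map big_filter.
rewrite perm_sym; apply: uniq_perm.
- rewrite map_inj_uniq ?filter_uniq ?index_enum_uniq //.
  move=> o1 o2 /= h; apply: (can_inj fgraphK); exact: val_inj.
- exact: permutations_uniq.
move=> l; rewrite mem_permutations; apply/mapP/idP.
- case=> o; rewrite mem_filter => /andP [io _] ->.
  apply: perm_enumT; first by rewrite uniq_fgraph.
  by rewrite size_tuple.
- move=> pe.
  have sz : size l == #|D| by rewrite (perm_size pe) -cardE cDT.
  exists (Finfun (Tuple sz)).
    rewrite mem_filter mem_index_enum andbT -uniq_fgraph FinfunK /=.
    by rewrite (perm_uniq pe) enum_uniq.
  by rewrite /g FinfunK.
Qed.

Section Conv.
Variable m : nat.
Local Notation n := m.+1.
Local Notation T := ('I_n * 'I_n)%type.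
Local Notation N := (n * n).

Variable o : ordering n.
Hypothesis io : injectiveb o.
Local Notation l := (tval (fgraph o)).

Lemma ul : uniq l. Proof. by rewrite uniq_fgraph. Qed.

Lemma sl : size l = N. Proof. by rewrite size_tuple card_ord. Qed.

Lemma al x : x \in l.
Proof.
apply/negPn/negP => xl.
have : uniq (x :: l) by rewrite /= xl ul.
move/card_uniqP; rewrite /= sl => h.
have := max_card (mem (x :: l)); rewrite h card_prod !card_ord.
by rewrite ltnn.
Qed.

Lemma idx_o (p : 'I_N) : index (o p) l = p.
Proof.
by rewrite -(nth_fgraph_ord (o p) p) index_uniq // ?ul // sl.
Qed.

Lemma o_idx x : o (Ordinal (idx_lt al sl x)) = x.
Proof.
rewrite -(nth_fgraph_ord x (Ordinal (idx_lt al sl x))) /=.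
by rewrite nth_index // al.
Qed.

Lemma ex_conv (P : nat -> T -> bool) :
  [exists p : 'I_N, P p (o p)] = [exists x : T, P (index x l) x].
Proof.
apply/existsP/existsP => [[p H]|[x H]].
  by exists (o p); rewrite idx_o.
by exists (Ordinal (idx_lt al sl x)); rewrite o_idx.
Qed.

Lemma noiso_conv k : no_isolated o k = noisoL l k.
Proof.
rewrite /no_isolated /noisoL; congr andb; apply: eq_forallb => i.
  rewrite (ex_conv (fun p x => (p < k) && (x.1 == i))).
  by apply: eq_existsb => x; rewrite andbC.
rewrite (ex_conv (fun p x => (p < k) && (x.2 == i))).
by apply: eq_existsb => x; rewrite andbC.
Qed.

Lemma stop_conv : stop_time o = stopL l.
Proof. by rewrite /stop_time /stopL; apply: eq_find => k; rewrite noiso_conv. Qed.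

Lemma G_conv : G_omega o = GL l.
Proof.
apply/setP => x; rewrite /G_omega /GL inE stop_conv.
apply/imsetP/idP => [[p] |h].
  by rewrite inE => hp ->; rewrite idx_o.
by exists (Ordinal (idx_lt al sl x)); rewrite ?inE // o_idx.
Qed.

End Conv.

Section PM.
Variable m : nat.
Local Notation n := m.+1.
Local Notation T := ('I_n * 'I_n)%type.

Lemma pm_Mof (s : {perm 'I_n}) : perfect_matching (Mof s).
Proof.
apply/andP; split; apply/forallP => i; apply/cards1P.
  exists (i, s i); apply/setP => -[a b]; rewrite !inE (inM s) /= xpair_eqE.
  by case: (eqVneq a i) => [->|] //=; rewrite ?andbT ?andbF // andbC.
exists ((s^-1)%g i, i); apply/setP => -[a b]; rewrite !inE (inM s) /= xpair_eqE.
case: (eqVneq b i) => [->|] //=; rewrite ?andbT ?andbF //.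
apply/eqP/eqP => [->|->]; by rewrite ?permK ?permKV.
Qed.

Lemma pm_ex (M : {set T}) : perfect_matching M -> exists s, M = Mof s.
Proof.
case/andP => /forallP Hr /forallP Hc.
have U1 : forall e1 e2, e1 \in M -> e2 \in M -> e1.1 = e2.1 -> e1 = e2.
  move=> e1 e2 e1M e2M h; case/cards1P: (Hr e1.1) => x Ex.
  have : e1 \in [set x] by rewrite -Ex inE e1M eqxx.
  have : e2 \in [set x] by rewrite -Ex inE e2M h eqxx.
  by rewrite !inE => /eqP -> /eqP ->.
have U2 : forall e1 e2, e1 \in M -> e2 \in M -> e1.2 = e2.2 -> e1 = e2.
  move=> e1 e2 e1M e2M h; case/cards1P: (Hc e1.2) => x Ex.
  have : e1 \in [set x] by rewrite -Ex inE e1M eqxx.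
  have : e2 \in [set x] by rewrite -Ex inE e2M h eqxx.
  by rewrite !inE => /eqP -> /eqP ->.
pose f i := (odflt (i, i) [pick e in M | e.1 == i]).2.
have fM : forall i, (i, f i) \in M.
  move=> i; rewrite /f; case: pickP => [x /andP [xM /eqP x1] | H0] /=.
    by rewrite -x1 -surjective_pairing.
  case/cards1P: (Hr i) => x Ex.
  have : x \in [set e in M | e.1 == i] by rewrite Ex inE.
  by rewrite inE H0.
have finj : injective f.
  move=> i j h; have := U2 _ _ (fM i) (fM j); rewrite /= h => /(_ erefl).
  by case.
exists (perm finj); apply/setP => -[a b]; rewrite (inM (perm finj)) /= permE.
apply/idP/eqP => [abM|->]; last exact: fM.
by have := U1 _ _ abM (fM a) erefl; case.
Qed.

End PM.

From mathcomp Require Import ring zify.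
Import GRing.Theory Num.Theory.

Lemma Mof_inj m : injective (@Mof m).
Proof.
move=> s t h; apply/permP => i.
have : (i, s i) \in Mof t by rewrite -h (inM s) eqxx.
by rewrite (inM t) /= => /eqP.
Qed.

Lemma H_eq m (l : seq (edge m.+1)) :
  #|[set M : {set edge m.+1} | (M \subset GL l) && perfect_matching M]| =
  \sum_(s : {perm 'I_m.+1}) ((Mof s \subset GL l) : nat).
Proof.
have -> : [set M : {set edge m.+1} | (M \subset GL l) && perfect_matching M] =
          [set Mof s | s in [set s : {perm 'I_m.+1} | Mof s \subset GL l]].
  apply/setP => M; rewrite inE; apply/andP/imsetP => [[sub pm]|[s]].
    case: (pm_ex pm) => s E; exists s => //; by rewrite inE -E.
  by rewrite inE => sub ->; split => //; exact: pm_Mof.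
rewrite card_imset; last exact: (@Mof_inj m).
rewrite -sum1_card big_mkcond /=; apply: eq_bigr => s _.
by rewrite inE; case: (_ \subset _).
Qed.

Lemma final_arith (A a b f1 f2 k cX cZ C1 C2 S : nat) :
  0 < A -> 0 < a -> 0 < b -> 0 < f1 -> 0 < f2 -> 0 < k ->
  cX * f1 = A * a * a -> cZ * f2 = A * a * b ->
  C1 * (k * a * a) = f1 -> C2 * (k * a * b) = f2 ->
  S + k * a * (k * cZ) = k * a * (k * (cX + cX)) ->
  (S%:R / A%:R = (k * a)%:R * (2 / C1%:R - 1 / C2%:R) :> rat)%R.
Proof.
move=> A0 a0 b0 f10 f20 k0 hX hZ h1 h2 hS.
have nz : forall x, 0 < x -> (x%:R != 0 :> rat)%R by move=> x; rewrite pnatr_eq0 -lt0n.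
have hX' := congr1 (fun x => x%:R : rat) hX; rewrite /= !natrM in hX'.
have hZ' := congr1 (fun x => x%:R : rat) hZ; rewrite /= !natrM in hZ'.
have h1' := congr1 (fun x => x%:R : rat) h1; rewrite /= !natrM in h1'.
have h2' := congr1 (fun x => x%:R : rat) h2; rewrite /= !natrM in h2'.
have hS' := congr1 (fun x => x%:R : rat) hS; rewrite /= !natrM !natrD !natrM in hS'.
have eX : (cX%:R = A%:R * a%:R * a%:R / f1%:R :> rat)%R.
  by rewrite -hX' mulfK ?nz.
have eZ : (cZ%:R = A%:R * a%:R * b%:R / f2%:R :> rat)%R.
  by rewrite -hZ' mulfK ?nz.
have e1 : (C1%:R = f1%:R / (k%:R * a%:R * a%:R) :> rat)%R.
  by rewrite -h1' mulfK // !mulf_neq0 ?nz.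
have e2 : (C2%:R = f2%:R / (k%:R * a%:R * b%:R) :> rat)%R.
  by rewrite -h2' mulfK // !mulf_neq0 ?nz.
have eS : (S%:R = k%:R * a%:R * (k%:R * (cX%:R + cX%:R)) - k%:R * a%:R * (k%:R * cZ%:R) :> rat)%R.
  by rewrite -hS' addrK.
rewrite eS e1 e2 eX eZ natrM.
have := nz _ A0; have := nz _ a0; have := nz _ b0; have := nz _ f10; have := nz _ f20; have := nz _ k0.
move=> n1 n2 n3 n4 n5 n6.
by field; rewrite ?n1 ?n2 ?n3 ?n4 ?n5 ?n6.
Qed.

Theorem corollary1 (n : nat) (hn : 1 <= n) :
  expected_pm n =
  ((n`!)%:R * (2 / ('C(2 * n - 1, n))%:R - 1 / ('C(3 * n - 2, n))%:R))%R.
Proof.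
case: n hn => [//|m] _.
set A := (m.+1 * m.+1)`!.
have cardTe : #|{: 'I_m.+1 * 'I_m.+1}| = m.+1 * m.+1 by rewrite card_prod card_ord.
have cardD : #|'I_(m.+1 * m.+1)| = #|{: 'I_m.+1 * 'I_m.+1}| by rewrite cardTe card_ord.
have den : #|[pred o : ordering m.+1 | is_ordering o]| = A.
  rewrite /A -sum1_card.
  have := sum_orderings (fun _ : seq ('I_m.+1 * 'I_m.+1) => 1) cardD.
  rewrite sum1_size size_pl cardTe => <-.
  by apply: eq_bigl => o.
set S := \sum_(o : ordering m.+1 | is_ordering o) num_pm_in (G_omega o).
have SE : S = \sum_(s : {perm 'I_m.+1})
               count (fun l => Mof s \subset GL l) (pl ('I_m.+1 * 'I_m.+1)%type).
  rewrite /S.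
  have -> : \sum_(o : ordering m.+1 | is_ordering o) num_pm_in (G_omega o) =
            \sum_(o : ordering m.+1 | injectiveb o)
               #|[set M : {set edge m.+1} | (M \subset GL (fgraph o)) && perfect_matching M]|.
    by apply: eq_bigr => o io; rewrite /num_pm_in (G_conv io).
  rewrite (sum_orderings (fun l => #|[set M : {set edge m.+1} | (M \subset GL l) && perfect_matching M]|) cardD).
  rewrite (eq_bigr _ (fun l _ => H_eq l)) exchange_big /=.
  by apply: eq_bigr => s _; rewrite count_sum.
have SZ : S + m.+1`! * (m.+1 * cZv m) = m.+1`! * (m.+1 * (cXv m + cXv m)).
  rewrite SE -card_Sn -!sum_nat_const -big_split /=.
  by apply: eq_bigr => s _; rewrite cnt_sub.
pose s1 := (1%g : {perm 'I_m.+1}).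
pose e := (ord0 : 'I_m.+1, s1 ord0).
have eM : e \in Mof s1 by rewrite (inM s1) eqxx.
have hX : cXv m * (m + m).+1`! = A * m`! * m`!.
  have := count_pattern (eMe s1 e) (erow e) (disj_row eM).
  by rewrite card_Me // card_rowE card_prod !card_ord (cntX eM).
have hZ : cZv m * (m + (m + m)).+1`! = A * m`! * (m + m)`!.
  have := count_pattern (eMe s1 e) (erowcol e) (disj_rowcol eM).
  by rewrite card_Me // card_rowcol card_prod !card_ord (cntZ eM).
have hC1 : 'C(2 * m.+1 - 1, m.+1) * (m.+1`! * m`!) = (m + m).+1`!.
  have -> : 2 * m.+1 - 1 = (m + m).+1 by lia.
  have := @bin_fact (m + m).+1 m.+1; rewrite subSS addnK => -> //.
  by rewrite ltnS leq_addr.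
have hC2 : 'C(3 * m.+1 - 2, m.+1) * (m.+1`! * (m + m)`!) = (m + (m + m)).+1`!.
  have -> : 3 * m.+1 - 2 = (m + (m + m)).+1.
    by lia.
  have := @bin_fact (m + (m + m)).+1 m.+1; rewrite subSS addKn => -> //.
  by rewrite ltnS leq_addr.
rewrite /expected_pm den -natr_sum -/S.
rewrite factS in hC1 hC2 SZ *.
have A0 : 0 < A by rewrite /A fact_gt0.
clearbody A.
apply: final_arith hX hZ hC1 hC2 SZ; by rewrite ?fact_gt0.
Qed.
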